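(* Let $\mathbb{K}$ be a non-Archimedean valued field with residue field $\mathfrak{r}$, and let $G$ be a discrete group. Set $R = \mathbb{F}_p$ if $\chi(\mathbb{K}) = p > 0$; $R = \mathbb{Q}$ if $\chi(\mathbb{K}) = \chi(\mathfrak{r}) = 0$; and $R = \mathbb{Z}$ if $\chi(\mathbb{K}) = 0$ and $\chi(\mathfrak{r}) = p > 0$. Let $n\ge 0$. If $H_n(G, R)$ is a finitely generated $R$-module, then the comparison map $c^n : H^n_b(G, \mathbb{K}) \to H^n(G, \mathbb{K})$ is surjective.
   Context: A non-Archimedean valued field is a field with an absolute value satisfying the ultrametric inequality; $\mathfrak{o}=\{|x|_\mathbb{K}\le1\}$, $\mathfrak{m}=\{|x|_\mathbb{K}<1\}$, residue field $\mathfrak{r}=\mathfrak{o}/\mathfrak{m}$, $\chi$ = characteristic. $H_n(G,R)$ is ordinary group homology with trivial coefficients. $\mathbb{K}$ is a trivial $G$-module. Bar resolution: $\overline{C}^0=\mathbb{K}$, $\overline{C}^n(G,\mathbb{K})$ = all maps $G^n\to\mathbb{K}$, $\overline{C}^n_b(G,\mathbb{K})$ = bounded such maps, with $\delta^nf(g_1,\dots,g_{n+1})=f(g_2,\dots,g_{n+1})+\sum_{i=1}^n(-1)^if(g_1,\dots,g_ig_{i+1},\dots,g_{n+1})+(-1)^{n+1}f(g_1,\dots,g_n)$. $H^\bullet(G,\mathbb{K})$ and $H^\bullet_b(G,\mathbb{K})$ are their cohomologies; the comparison map $c^n$ is induced by inclusion. *)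

(* Defs.v *)
From HB Require Import structures.
From mathcomp Require Import all_boot all_order all_algebra.
From mathcomp Require Import reals.
Set Implicit Arguments. Unset Strict Implicit. Unset Printing Implicit Defensive.
Import Order.TTheory GRing.Theory Num.Theory.
Local Open Scope ring_scope.

Definition nonarch_abs (K : fieldType) (V : realType) (a : K -> V) : Prop :=
  [/\ forall x, 0 <= a x,
      forall x, a x = 0 <-> x = 0,
      forall x y, a (x * y) = a x * a y
    & forall x y, a (x + y) <= Num.max (a x) (a y)].

(** Characteristic of the residue field r = o/m, o = {|x| <= 1}, m = {|x| < 1}:
    the class of n%:R in r is zero iff n%:R lies in m, i.e. |n%:R| < 1. *)
Definition residue_char_zero (K : fieldType) (V : realType) (a : K -> V) : Prop :=
  forall n : nat, (0 < n)%N -> ~ (a n%:R < 1).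
Definition residue_char_eq (K : fieldType) (V : realType) (a : K -> V) (p : nat) : Prop :=
  (0 < p)%N /\ a p%:R < 1 /\ forall m : nat, (0 < m < p)%N -> ~ (a m%:R < 1).

(** An element of G^n is encoded as a list of length n.
    [face g i] is the i-th face map  G^(n+1) -> G^n  (n+1 = size g):
      i = 0      : (g1,...,g_{n+1}) |-> (g2,...,g_{n+1})
      1<=i<=n    : |-> (g1,...,g_i g_{i+1},...,g_{n+1})
      i = n+1    : |-> (g1,...,g_n). *)
Definition face (G : groupType) (g : seq G) (i : nat) : seq G :=
  if i == 0%N then behead g
  else if i == size g then take (size g).-1 g
  else take i.-1 g ++ ((nth 1%g g i.-1 * nth 1%g g i)%g :: drop i.+1 g).

(** A chain is a finite formal R-linear combination of elements of G^n. *)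
Definition chain (R : comNzRingType) (G : groupType) := seq (R * seq G).

Definition coef (R : comNzRingType) (G : groupType) (c : chain R G) (t : seq G) : R :=
  \sum_(x <- c | x.2 == t) x.1.

Definition is_nchain (R : comNzRingType) (G : groupType) (n : nat) (c : chain R G) :=
  all (fun x => size x.2 == n) c.

Definition bd (R : comNzRingType) (G : groupType) (c : chain R G) : chain R G :=
  flatten [seq [seq ((-1) ^+ i * x.1, face x.2 i) | i <- iota 0 (size x.2).+1]
          | x <- c].

(** n-cycles (the boundary C_0 -> C_{-1} = 0 is zero). *)
Definition is_ncycle (R : comNzRingType) (G : groupType) (n : nat) (c : chain R G) :=
  is_nchain n c /\ ((0 < n)%N -> forall t, coef (bd c) t = 0).

(** H_n(G,R) = Z_n / B_n is a finitely generated R-module: finitely many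
    n-cycles whose classes generate, i.e. every n-cycle is an R-linear
    combination of them plus a boundary of an (n+1)-chain. *)
Definition homology_fg (R : comNzRingType) (G : groupType) (n : nat) : Prop :=
  exists zs : seq (chain R G),
    (forall i, (i < size zs)%N -> is_ncycle n (nth [::] zs i)) /\
    forall c : chain R G, is_ncycle n c ->
      exists (rs : seq R) (b : chain R G),
        size rs = size zs /\ is_nchain n.+1 b /\
        forall t, coef c t = \sum_(i < size zs) rs`_i * coef (nth [::] zs i) t
                             + coef (bd b) t.

(** An n-cochain is a map G^n -> K; we model it as [f : seq G -> K], of
    which only the values on lists of length n matter. *)
Definition cdelta (K : fieldType) (G : groupType) (f : seq G -> K) (g : seq G) : K :=
  \sum_(i < (size g).+1) (-1) ^+ i * f (face g i).

Definition is_ncocycle (K : fieldType) (G : groupType) (n : nat) (f : seq G -> K) :=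
  forall g : seq G, size g = n.+1 -> cdelta f g = 0.

Definition is_bounded (K : fieldType) (V : realType) (a : K -> V) (G : groupType)
    (n : nat) (f : seq G -> K) :=
  exists M : V, forall g : seq G, size g = n -> a (f g) <= M.

(** Surjectivity of the comparison map c^n : H^n_b(G,K) -> H^n(G,K):
    every n-cocycle is cohomologous (in the unbounded complex) to a bounded
    n-cocycle; for n = 0 the coboundaries are 0 (C^{-1} = 0). *)
Definition comparison_surjective (K : fieldType) (V : realType) (a : K -> V)
    (G : groupType) (n : nat) : Prop :=
  forall f : seq G -> K, is_ncocycle n f ->
    exists fb : seq G -> K,
      [/\ is_ncocycle n fb, is_bounded a n fb &
          exists h : seq G -> K, forall g : seq G, size g = n ->
            f g - fb g = (if n is 0%N then 0 else cdelta h g)].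

(* Main.v *)
Require Import Defs.
From HB Require Import structures.
From mathcomp Require Import all_boot all_order all_algebra.
From mathcomp Require Import reals.
From mathcomp Require Import zify ring.
From mathcomp Require Import boolp classical_sets.
From Stdlib Require Import Classical.
Set Implicit Arguments. Unset Strict Implicit. Unset Printing Implicit Defensive.
Import Order.TTheory GRing.Theory Num.Theory.
Local Open Scope ring_scope.

Section ChainBasics.
Variables (R : comNzRingType) (G : groupType).
Implicit Types (c : chain R G) (t : seq G).

Definition scale (r : R) c : chain R G := [seq (r * x.1, x.2) | x <- c].
Definition keys c := [seq x.2 | x <- c].

Lemma coef_nil t : coef ([::] : chain R G) t = 0.
Proof. by rewrite /coef big_nil. Qed.

Lemma coef_cons x c t : coef (x :: c) t = (if x.2 == t then x.1 else 0) + coef c t.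
Proof. by rewrite /coef big_cons; case: ifP => //; rewrite add0r. Qed.

Lemma coef_cat c c' t : coef (c ++ c') t = coef c t + coef c' t.
Proof. by rewrite /coef big_cat. Qed.

Lemma coef_scale r c t : coef (scale r c) t = r * coef c t.
Proof. by rewrite /coef big_map mulr_sumr. Qed.

Lemma bd_cat c c' : bd (c ++ c') = bd c ++ bd c'.
Proof. by rewrite /bd map_cat flatten_cat. Qed.

Lemma bd_cons x c : bd (x :: c) = bd [:: x] ++ bd c.
Proof. by rewrite -cat1s bd_cat. Qed.

Lemma coef_bd_scale r c t : coef (bd (scale r c)) t = r * coef (bd c) t.
Proof.
elim: c => [|x c IH]; first by rewrite /bd /= coef_nil mulr0.
rewrite /= bd_cons [in RHS]bd_cons !coef_cat IH mulrDr; congr (_ + _).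
rewrite /bd /coef !big_nil !addr0 !big_map mulr_sumr.
by apply: eq_bigr => i _ /=; rewrite mulrCA.
Qed.

Lemma coef_bd_cat c c' t : coef (bd (c ++ c')) t = coef (bd c) t + coef (bd c') t.
Proof. by rewrite bd_cat coef_cat. Qed.

Lemma is_nchain_cat n c c' : is_nchain n (c ++ c') = is_nchain n c && is_nchain n c'.
Proof. by rewrite /is_nchain all_cat. Qed.

Lemma is_nchain_scale n r c : is_nchain n (scale r c) = is_nchain n c.
Proof. by rewrite /is_nchain all_map. Qed.

Lemma coef_notin c t : t \notin keys c -> coef c t = 0.
Proof.
move=> H; rewrite /coef big_seq_cond big1 // => x /andP[xc /eqP xt].
by case/negP: H; rewrite -xt; apply: map_f.
Qed.

End ChainBasics.

Section Pairing.
Variables (R : comNzRingType) (S : comNzRingType) (rho : {rmorphism R -> S}) (G : groupType).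
Implicit Types (c : chain R G) (t : seq G) (f : seq G -> S).

Definition pair f c := \sum_(x <- c) rho x.1 * f x.2.

Lemma pair_cat f c c' : pair f (c ++ c') = pair f c + pair f c'.
Proof. by rewrite /pair big_cat. Qed.

Lemma pair_scale f r c : pair f (scale r c) = rho r * pair f c.
Proof. by rewrite /pair big_map mulr_sumr; apply: eq_bigr => x _ /=; rewrite rmorphM mulrA. Qed.

Lemma pair_coef f c (L : seq (seq G)) : uniq L -> {subset keys c <= L} ->
  pair f c = \sum_(t <- L) rho (coef c t) * f t.
Proof.
move=> uL; elim: c => [|x c IH] sub.
  by rewrite /pair big_nil big1 // => t _; rewrite coef_nil rmorph0 mul0r.
rewrite /pair big_cons -/(pair f c) IH; last by move=> t tc; apply: sub; rewrite /= inE tc orbT.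
under [in RHS]eq_bigr => t _ do rewrite coef_cons rmorphD mulrDl.
rewrite big_split /=; congr (_ + _).
have xL : x.2 \in L by apply: sub; rewrite /= inE eqxx.
rewrite (bigD1_seq x.2) //= eqxx big1 ?addr0 // => t /negbTE tx.
by rewrite eq_sym tx rmorph0 mul0r.
Qed.

Lemma pair_coef_eq f c c' : (forall t, coef c t = coef c' t) -> pair f c = pair f c'.
Proof.
move=> E; rewrite (@pair_coef f c (undup (keys c ++ keys c'))) ?undup_uniq //; last first.
  by move=> t tc; rewrite mem_undup mem_cat tc.
rewrite (@pair_coef f c' (undup (keys c ++ keys c'))) ?undup_uniq //; last first.
  by move=> t tc; rewrite mem_undup mem_cat tc orbT.
by apply: eq_bigr => t _; rewrite E.
Qed.

Lemma pair_supp f f' c : (forall t, coef c t != 0 -> f t = f' t) -> pair f c = pair f' c.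
Proof.
move=> E; rewrite !(@pair_coef _ c (undup (keys c))) ?undup_uniq //;
  try by move=> t; rewrite mem_undup.
apply: eq_bigr => t _; have [->|/E ->//] := eqVneq (coef c t) 0.
by rewrite rmorph0 !mul0r.
Qed.

Lemma pair_nil f : pair f [::] = 0.
Proof. by rewrite /pair big_nil. Qed.

Lemma pair_single f r t : pair f [:: (r, t)] = rho r * f t.
Proof. by rewrite /pair big_cons big_nil addr0. Qed.

End Pairing.

Section PairingF.
Variables (R : comNzRingType) (K : fieldType) (rho : {rmorphism R -> K}) (G : groupType).
Implicit Types (c : chain R G) (t : seq G) (f : seq G -> K).

Lemma pair_bd f c : pair rho f (bd c) = pair rho (cdelta f) c.
Proof.
rewrite /pair /bd big_flatten big_map; apply: eq_bigr => x _.
rewrite big_map /cdelta mulr_sumr -(big_mkord xpredT (fun i => rho x.1 * ((-1) ^+ i * f (face x.2 i)))).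
rewrite /index_iota subn0; apply: eq_bigr => i _ /=.
by rewrite rmorphM rmorphXn rmorphN1 mulrCA mulrA.
Qed.

Lemma cdelta_pair f g : cdelta f g = pair rho f (bd [:: (1, g)]).
Proof. by rewrite pair_bd /pair big_cons big_nil addr0 /= rmorph1 mul1r. Qed.

End PairingF.

Section Faces.
Variable G : groupType.
Implicit Types g : seq G.

Definition fnth g (i k : nat) : G :=
  if (k.+1 < i)%N then nth 1%g g k
  else if k.+1 == i then (nth 1%g g k * nth 1%g g k.+1)%g
  else nth 1%g g k.+1.

Lemma size_face g N i : size g = N.+1 -> (i <= N.+1)%N -> size (face g i) = N.
Proof.
move=> sg iN; rewrite /face; case: eqP => [_|/eqP i0]; first by rewrite size_behead sg.
case: eqP => [_|/eqP iS]; first by rewrite size_take sg /= ltnSn.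
rewrite size_cat /= size_take size_drop sg.
have -> : (i.-1 < N.+1)%N by lia.
lia.
Qed.

Lemma nth_face g N i k : size g = N.+1 -> (i <= N.+1)%N -> (k < N)%N ->
  nth 1%g (face g i) k = fnth g i k.
Proof.
move=> sg iN kN; rewrite /face /fnth; case: eqP => [->|/eqP i0].
  by rewrite nth_behead.
case: eqP => [iS|/eqP iS].
  rewrite nth_take; last by rewrite sg /=.
  by have -> : (k.+1 < i)%N by lia.
rewrite nth_cat size_take sg.
have -> : (i.-1 < N.+1)%N by lia.
case: (ltnP k i.-1) => ki.
  have -> : (k.+1 < i)%N by lia.
  by rewrite nth_take.
case: (eqVneq k i.-1) => [ke|kne].
  have -> : (k.+1 < i)%N = false by lia.
  have -> : k.+1 == i by apply/eqP; lia.
  by rewrite ke subnn /= prednK //; lia.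
have -> : (k.+1 < i)%N = false by lia.
have -> : (k.+1 == i) = false by apply/eqP; lia.
have -> : (k - i.-1)%N = (k - i.-1).-1.+1 by lia.
rewrite /= nth_drop; congr nth; lia.
Qed.

Lemma face_face g N i j : size g = N.+1 -> (i <= j)%N -> (j <= N)%N -> (0 < N)%N ->
  face (face g i) j = face (face g j.+1) i.
Proof.
move=> sg ij jN N0.
have s1 : size (face g i) = N by apply: size_face => //; lia.
have s2 : size (face g j.+1) = N by apply: size_face => //; lia.
have hN : N = N.-1.+1 by lia.
have s1' : size (face g i) = N.-1.+1 by rewrite -hN.
have s2' : size (face g j.+1) = N.-1.+1 by rewrite -hN.
have jN' : (j <= N.-1.+1)%N by rewrite -hN.
have iN' : (i <= N.-1.+1)%N by rewrite -hN; lia.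
apply: (@eq_from_nth _ 1%g).
  by rewrite (size_face s1' jN') (size_face s2' iN').
move=> k; rewrite (size_face s1' jN') => kN.
rewrite (nth_face s1' jN' kN) (nth_face s2' iN' kN).
rewrite /fnth.
have nf := fun m (mN : (m < N)%N) => @nth_face g N i m sg ltac:(lia) mN.
have nf' := fun m (mN : (m < N)%N) => @nth_face g N j.+1 m sg ltac:(lia) mN.
rewrite !nf ?nf' /fnth; try lia.
by repeat (case: ifP => ?); try (exfalso; lia); rewrite ?mulgA //; congr (nth _ _ _ * _)%g; lia.
Qed.

Lemma bd_single (R : comNzRingType) (x : R * seq G) :
  bd [:: x] = [seq ((-1) ^+ i * x.1, face x.2 i) | i <- iota 0 (size x.2).+1].
Proof. by rewrite /bd /= ?cats0. Qed.

Lemma coef_bd (R : comNzRingType) (c : chain R G) t : coef (bd c) t =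
  \sum_(x <- c) \sum_(j < (size x.2).+1) (if face x.2 j == t then (-1) ^+ j * x.1 else 0).
Proof.
rewrite /coef /bd big_flatten big_map; apply: eq_bigr => x _.
rewrite big_map big_mkcond -(big_mkord xpredT (fun j => if face x.2 j == t then (-1) ^+ j * x.1 else 0)).
by rewrite /index_iota subn0.
Qed.

Lemma bdbd (R : comNzRingType) (a : R) g t : (1 < size g)%N ->
  coef (bd (bd [:: (a, g)])) t = 0.
Proof.
move=> sg2; set N := (size g).-1.
have sg : size g = N.+1 by rewrite /N; lia.
have N0 : (0 < N)%N by rewrite /N; lia.
rewrite coef_bd bd_single big_map.
have -> : iota 0 (size (a, g).2).+1 = index_iota 0 (N.+2) by rewrite /index_iota subn0 /= sg.
rewrite big_mkord /=.
have E : forall i : 'I_N.+2, \sum_(j < (size (face g i)).+1)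
      (if face (face g i) j == t then (-1) ^+ j * ((-1) ^+ i * a) else 0) =
    \sum_(j < N.+1) (if face (face g i) j == t then (-1) ^+ (i + j) * a else 0).
  move=> i; rewrite (@size_face _ N) //; last by have := ltn_ord i; lia.
  by apply: eq_bigr => j _; rewrite mulrA -exprD addnC.
rewrite (eq_bigr _ (fun i _ => E i)) {E} pair_big /=.
set phi := fun p : 'I_N.+2 * 'I_N.+1 =>
  if face (face g p.1) p.2 == t then (-1) ^+ (p.1 + p.2) * a else 0.
rewrite (bigID (fun p : 'I_N.+2 * 'I_N.+1 => (p.1 <= p.2)%N)) /=.
pose sigma := fun p : 'I_N.+2 * 'I_N.+1 =>
  if (p.1 <= p.2)%N then ((inord p.2.+1 : 'I_N.+2), (inord p.1 : 'I_N.+1))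
  else ((inord p.2 : 'I_N.+2), (inord p.1.-1 : 'I_N.+1)).
have sK : involutive sigma.
  move=> [i j]; rewrite /sigma /=.
  have hi := ltn_ord i; have hj := ltn_ord j.
  case: (leqP i j) => ij /=.
    rewrite !inordK; try lia.
    have -> : (j.+1 <= i)%N = false by lia.
    by congr (_, _); apply: val_inj; rewrite /= inordK //=; lia.
  rewrite !inordK; try lia.
  have -> : (j <= i.-1)%N by lia.
  by congr (_, _); apply: val_inj; rewrite /= inordK //=; lia.
rewrite (reindex_inj (inv_inj sK)) /=.
apply/eqP; rewrite addr_eq0 -sumrN; apply/eqP.
apply: eq_big => [[i j]|[i j] /=].
  rewrite /sigma /=; have hi := ltn_ord i; have hj := ltn_ord j.
  by case: (leqP i j) => ij /=; rewrite !inordK; try lia.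
rewrite /sigma /=; have hi := ltn_ord i; have hj := ltn_ord j.
case: (leqP i j) => ij /=; rewrite !inordK; try lia.
move=> _.
have -> : i = i.-1.+1 :> nat by lia.
rewrite -(@face_face g N j i.-1) //; try lia.
rewrite prednK; last lia.
case: eqP => _; last by rewrite oppr0.
have -> : (i + j = (j + i.-1).+1)%N by lia.
by rewrite exprS mulN1r mulNr opprK.
Qed.

End Faces.

Section FA.
Variables (R : idomainType) (K : fieldType) (iota : {rmorphism R -> K}).
Hypothesis iota_inj : forall r, iota r = 0 -> r = 0.

Definition vclosed (W : (nat -> R) -> Prop) :=
  forall a b w w', W w -> W w' -> W (fun i => a * w i + b * w' i).

Lemma FA k : forall W, vclosed W ->
  exists es : seq (nat -> R),
    (forall j, (j < size es)%N -> forall w, W w ->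
        \sum_(i < k) w i * nth (fun _ => 0) es j i = 0) /\
    (forall v : nat -> K, (forall w, W w -> \sum_(i < k) iota (w i) * v i = 0) ->
       exists a : nat -> K, forall i, (i < k)%N ->
         v i = \sum_(j < size es) a j * iota (nth (fun _ => 0) es j i)).
Proof.
elim: k => [|k IH] W WC.
  by exists [::]; split=> // v _; exists (fun _ => 0).
pose W0 := fun x : nat -> R => exists w, [/\ W w, w k = 0 & forall i, (i < k)%N -> w i = x i].
have W0C : vclosed W0.
  move=> a b x x' [w [Ww wk wx]] [w' [Ww' wk' wx']].
  exists (fun i => a * w i + b * w' i); split; first exact: WC.
    by rewrite wk wk' !mulr0 addr0.
  by move=> i ik; rewrite wx ?wx'.
have [es' [orth' span']] := IH W0 W0C.
have restr : forall v : nat -> K, (forall w, W w -> \sum_(i < k.+1) iota (w i) * v i = 0) ->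
    forall x, W0 x -> \sum_(i < k) iota (x i) * v i = 0.
  move=> v hv x [w [Ww wk wx]].
  have := hv w Ww; rewrite big_ord_recr /= wk rmorph0 mul0r addr0 => H.
  by rewrite -[RHS]H; apply: eq_bigr => i _ /=; rewrite wx.
case: (classic (exists ws, W ws /\ ws k != 0)) => [[ws [Wws wsk]]|noW].
  pose m := ws k.
  pose F := fun e : nat -> R => fun i => if (i < k)%N then m * e i
            else if i == k then - \sum_(i' < k) ws i' * e i' else 0.
  exists (map F es'); split.
    move=> j; rewrite size_map => jl w Ww.
    rewrite (nth_map (fun _ => 0)) // big_ord_recr /= /F ltnn eqxx.
    under eq_bigr => i _ do rewrite ltn_ord mulrCA mulrA.
    rewrite mulrN mulr_sumr -sumrB.
    have H := orth' j jl (fun i => m * w i - w k * ws i).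
    rewrite -[RHS]H; last first.
      exists (fun i => m * w i + (- w k) * ws i); split.
      - exact: WC.
      - by rewrite /m mulNr mulrC addrN.
      - by move=> i _; rewrite mulNr.
    by apply: eq_bigr => i _; rewrite mulrBl mulrA.
  move=> v hv.
  have [a' Ha'] := span' v (restr v hv).
  have im0 : iota m != 0 by apply/eqP => /iota_inj; apply/eqP.
  exists (fun j => a' j / iota m) => i; rewrite size_map ltnS leq_eqVlt => /orP[/eqP ->|ik].
    under eq_bigr => j _ do rewrite (nth_map (fun _ => 0)) // /F ltnn eqxx.
    have := hv ws Wws; rewrite big_ord_recr /= -/m => /eqP; rewrite addr_eq0 => /eqP E.
    apply: (mulfI im0); rewrite -[iota m * v k]opprK -E mulr_sumr.
    rewrite (eq_bigr (fun j : 'I_(size es') => - \sum_(i' < k) a' j * iota (ws i' * nth (fun _ => 0) es' j i'))); last first.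
      by move=> j _; rewrite mulrA mulrCA (divff im0) mulr1 rmorphN rmorph_sum mulrN mulr_sumr.
    rewrite sumrN; congr (- _).
    rewrite exchange_big /=; apply: eq_bigr => i' _.
    rewrite (Ha' i' (ltn_ord i')) mulr_sumr; apply: eq_bigr => j _.
    by rewrite rmorphM mulrCA.
  rewrite Ha' //; apply: eq_bigr => j _.
  rewrite (nth_map (fun _ => 0)) // /F ik rmorphM -/m.
  by rewrite mulrA mulfVK.
have Wk : forall w, W w -> w k = 0.
  move=> w Ww; apply/eqP; apply: contraT => wk; exfalso; apply: noW; exists w; split=> //.
pose F := fun e : nat -> R => fun i => if (i < k)%N then e i else 0.
pose ek := fun i : nat => if i == k then 1 else 0 : R.
exists (map F es' ++ [:: ek]); split.
  move=> j; rewrite size_cat size_map /= addn1 ltnS leq_eqVlt => /orP[/eqP ->|jl] w Ww.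
    rewrite nth_cat size_map ltnn subnn /= big_ord_recr /= /ek eqxx Wk // mul0r addr0.
    by apply: big1 => i _; rewrite (ltn_eqF (ltn_ord i)) mulr0.
  rewrite nth_cat size_map jl (nth_map (fun _ => 0)) // big_ord_recr /= /F ltnn mulr0 addr0.
  have H := orth' j jl w; rewrite -[RHS]H.
    by apply: eq_bigr => i _ /=; rewrite ltn_ord.
  by exists w; split=> //; apply: Wk.
move=> v hv.
have [a' Ha'] := span' v (restr v hv).
exists (fun j => if (j < size es')%N then a' j else v k) => i ik.
rewrite size_cat size_map /= addn1 big_ord_recr /= nth_cat size_map ltnn subnn /= /ek.
under eq_bigr => j _ do rewrite (ltn_ord j) nth_cat size_map (ltn_ord j) (nth_map (fun _ => 0)) //.
move: ik; rewrite ltnS leq_eqVlt => /orP[/eqP ->|ik].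
  rewrite eqxx rmorph1 mulr1 big1 ?add0r // => j _.
  by rewrite /F ltnn rmorph0 mulr0.
rewrite (ltn_eqF ik) rmorph0 mulr0 addr0 Ha' //; apply: eq_bigr => j _.
by rewrite /F ik.
Qed.

End FA.

Lemma zorn_gen (T : Type) (t0 : T) (le : T -> T -> Prop) :
  (forall t, le t t) -> (forall r s t, le r s -> le s t -> le r t) ->
  (forall A : T -> Prop, (forall s t, A s -> A t -> le s t \/ le t s) ->
     exists ub, forall s, A s -> le s ub) ->
  exists t, forall s, le t s -> le s t.
Proof.
move=> refl tr ch.
pose R0 := fun s t => `[< le s t >].
have h1 : forall t, R0 t t by move=> t; apply/asboolP.
have h2 : forall r s t, R0 r s -> R0 s t -> R0 r t.
  by move=> r s t /asboolP ? /asboolP ?; apply/asboolP; apply: tr; eauto.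
have h3 : forall A : set T, total_on A (fun x y => R0 x y) -> exists t, forall s, A s -> R0 s t.
  move=> A tot.
  have tot' : forall s t, A s -> A t -> le s t \/ le t s.
    by move=> s t As At; case: (tot s t As At) => /asboolP; [left|right].
  have [ub Hub] := ch A tot'.
  by exists ub => s As; apply/asboolP; apply: Hub.
have [t Ht] := @ZL_preorder T t0 R0 h1 h2 h3.
by exists t => s Hs; have /asboolP := Ht s (asboolT Hs).
Qed.

Lemma cover_list (T : Type) (X : eqType) (A : T -> Prop) (le : T -> T -> Prop)
    (Y : T -> X -> Prop) :
  (forall s t, A s -> A t -> le s t \/ le t s) ->
  (forall s t x, le s t -> Y s x -> Y t x) ->
  forall (L : seq X) s0, A s0 -> (forall x, x \in L -> exists s, A s /\ Y s x) ->
  exists s, A s /\ forall x, x \in L -> Y s x.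
Proof.
move=> tot mono; elim=> [|x L IH] s0 As0 H; first by exists s0.
have [s1 [As1 H1]] := IH s0 As0 (fun z zL => H z (mem_behead (s:=x :: L) zL)).
have [s2 [As2 H2]] := H x (mem_head _ _).
have [le12|le21] := tot s1 s2 As1 As2.
  exists s2; split=> // z; rewrite inE => /orP[/eqP->//|zL].
  by apply: mono le12 _; apply: H1.
exists s1; split=> // z; rewrite inE => /orP[/eqP->|zL]; last by apply: H1.
by apply: mono le21 _.
Qed.

Section BdCoef.
Variables (R : comNzRingType) (G : groupType).

Lemma coef_bd_eq (c c' : chain R G) : (forall t, coef c t = coef c' t) ->
  forall t, coef (bd c) t = coef (bd c') t.
Proof.
move=> E t; pose beta := fun s : seq G =>
  \sum_(j < (size s).+1) (if face s j == t then (-1) ^+ j else 0) : R.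
have P : forall c0 : chain R G, coef (bd c0) t = pair idfun beta c0.
  move=> c0; rewrite coef_bd /pair; apply: eq_bigr => x _; rewrite mulr_sumr.
  by apply: eq_bigr => j _ /=; case: ifP => _; rewrite ?mulr0 // mulrC.
by rewrite !P; apply: pair_coef_eq.
Qed.

End BdCoef.

Section CE.
Variables (R : idomainType) (G : groupType) (n : nat) (lam : chain R G -> R).
Hypothesis PID : forall P : R -> Prop, P 0 ->
  (forall a b x y, P x -> P y -> P (a * x + b * y)) ->
  exists d, P d /\ forall x, P x -> exists q, x = q * d.

Definition inV (Y : seq G -> Prop) (c : chain R G) :=
  is_nchain n c /\ forall t, coef (bd c) t != 0 -> Y t.
Definition cyc0 c := inV (fun _ => False) c.

Hypothesis lamD : forall c c', cyc0 c -> cyc0 c' -> lam (c ++ c') = lam c + lam c'.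
Hypothesis lamZ : forall r c, cyc0 c -> lam (scale r c) = r * lam c.
Hypothesis lamE : forall c c', cyc0 c -> cyc0 c' -> (forall t, coef c t = coef c' t) ->
  lam c = lam c'.

Lemma inV_cat Y c c' : inV Y c -> inV Y c' -> inV Y (c ++ c').
Proof.
move=> [nc Hc] [nc' Hc']; split; first by rewrite is_nchain_cat nc nc'.
move=> t; rewrite coef_bd_cat; case: (eqVneq (coef (bd c) t) 0) => [->|/Hc//].
by rewrite add0r => /Hc'.
Qed.

Lemma inV_scale Y r c : inV Y c -> inV Y (scale r c).
Proof.
move=> [nc Hc]; split; first by rewrite is_nchain_scale.
move=> t; rewrite coef_bd_scale; case: (eqVneq (coef (bd c) t) 0) => [->|/Hc//].
by rewrite mulr0 eqxx.
Qed.

Lemma inV_mono (Y Y' : seq G -> Prop) c : (forall t, Y t -> Y' t) -> inV Y c -> inV Y' c.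
Proof. by move=> sub [nc Hc]; split=> // t /Hc /sub. Qed.

Lemma inV_nil Y : inV Y [::].
Proof. by split=> // t; rewrite /bd /= coef_nil eqxx. Qed.

Definition goodL (Y : seq G -> Prop) (L : chain R G -> R) :=
  [/\ forall c c', inV Y c -> inV Y c' -> L (c ++ c') = L c + L c',
      forall r c, inV Y c -> L (scale r c) = r * L c,
      forall c c', inV Y c -> inV Y c' -> (forall t, coef c t = coef c' t) -> L c = L c'
    & forall c, cyc0 c -> L c = lam c].

Definition stateC := {p : (seq G -> Prop) * (chain R G -> R) | goodL p.1 p.2}.
Definition leC (s s' : stateC) :=
  (forall t, (sval s).1 t -> (sval s').1 t) /\
  (forall c, inV (sval s).1 c -> (sval s).2 c = (sval s').2 c).

Lemma good0 : goodL (fun _ => False) lam.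
Proof. by split. Qed.

Definition s0C : stateC := exist _ (fun _ => False, lam) good0.

Lemma le0C s : leC s0C s.
Proof.
split=> //= c cc; case: (svalP s) => _ _ _ L4.
by rewrite L4.
Qed.

Definition slist (c : chain R G) := [seq t <- keys (bd c) | coef (bd c) t != 0].

Lemma inV_slist Y c : inV Y c <-> is_nchain n c /\ forall t, t \in slist c -> Y t.
Proof.
split=> [[nc Hc]|[nc Hc]]; split=> // t.
  by rewrite mem_filter => /andP[/Hc].
move=> nz; apply: Hc; rewrite mem_filter nz /=.
by apply: contraR nz => /coef_notin ->.
Qed.

Section Chain.
Variable A : stateC -> Prop.
Hypothesis tot : forall s t, A s -> A t -> leC s t \/ leC t s.
Hypothesis A0 : A s0C.

Definition Ystar t := exists s, A s /\ (sval s).1 t.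
Definition Lstar c := match pselect (exists s, A s /\ inV (sval s).1 c) with
  | left H => (sval (sval (cid H))).2 c | right _ => lam c end.

Lemma Lstar_eq s c : A s -> inV (sval s).1 c -> Lstar c = (sval s).2 c.
Proof.
move=> As cs; rewrite /Lstar; case: pselect => [H|[]]; last by exists s.
case: (cid H) => s' [As' cs'] /=.
by have [[_ E]|[_ E]] := tot As As'; [rewrite E|rewrite E].
Qed.

Lemma cover (L : seq (seq G)) : (forall t, t \in L -> Ystar t) ->
  exists s, A s /\ forall t, t \in L -> (sval s).1 t.
Proof.
move=> H; apply: (@cover_list _ _ A leC (fun s t => (sval s).1 t)) => //.
  by move=> s t x [sub _]; apply: sub.
exact: A0.
Qed.

Lemma cover2 c c' : inV Ystar c -> inV Ystar c' ->
  exists s, A s /\ inV (sval s).1 c /\ inV (sval s).1 c'.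
Proof.
move=> /inV_slist [nc Hc] /inV_slist [nc' Hc'].
have H : forall t, t \in slist c ++ slist c' -> Ystar t.
  by move=> t; rewrite mem_cat => /orP[/Hc|/Hc'].
have [s [As Hs]] := cover H.
exists s; split=> //; split; apply/inV_slist; split=> // t tL; apply: Hs;
  by rewrite mem_cat tL ?orbT.
Qed.

Lemma goodStar : goodL Ystar Lstar.
Proof.
split.
- move=> c c' cc cc'; have [s [As [cs cs']]] := cover2 cc cc'.
  case: (svalP s) => L1 _ _ _.
  by rewrite !(Lstar_eq As) ?L1 //; apply: inV_cat.
- move=> r c cc; have [s [As [cs _]]] := cover2 cc cc.
  case: (svalP s) => _ L2 _ _.
  by rewrite !(Lstar_eq As) ?L2 //; apply: inV_scale.
- move=> c c' cc cc' E; have [s [As [cs cs']]] := cover2 cc cc'.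
  case: (svalP s) => _ _ L3 _.
  by rewrite !(Lstar_eq As) //; apply: L3.
- move=> c cc; rewrite (Lstar_eq A0) //.
Qed.

Definition sStar : stateC := exist _ (Ystar, Lstar) goodStar.

Lemma sStar_ub s : A s -> leC s sStar.
Proof.
move=> As; split=> /= [t Yt|c cc]; first by exists s.
by rewrite (Lstar_eq As).
Qed.

End Chain.

Lemma chainC (A : stateC -> Prop) : (forall s t, A s -> A t -> leC s t \/ leC t s) ->
  exists ub, forall s, A s -> leC s ub.
Proof.
move=> tot; pose A' := fun s => A s \/ s = s0C.
have tot' : forall s t, A' s -> A' t -> leC s t \/ leC t s.
  move=> s t [As|->] [At|->]; first exact: tot.
  - by right; apply: le0C.
  - by left; apply: le0C.
  - by left; apply: le0C.
have A0 : A' s0C by right.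
by exists (sStar tot' A0) => s As; apply: sStar_ub; left.
Qed.


Lemma extC (s : stateC) y : ~ (sval s).1 y -> exists s', leC s s' /\ (sval s').1 y.
Proof.
move=> ny.
have [L1 L2 L3 L4] := svalP s.
move: L1 L2 L3 L4 ny; set Y := (sval s).1; set L := (sval s).2 => L1 L2 L3 L4 ny.
pose Y' := fun t => Y t \/ t = y.
pose P := fun d => exists c, inV Y' c /\ coef (bd c) y = d.
have P0 : P 0 by exists [::]; split; [apply: inV_nil | rewrite /bd /= coef_nil].
have PC : forall a b x z, P x -> P z -> P (a * x + b * z).
  move=> a b x z [c [cV <-]] [c' [c'V <-]]; exists (scale a c ++ scale b c'); split.
    by apply: inV_cat; apply: inV_scale.
  by rewrite coef_bd_cat !coef_bd_scale.
have [d [Pd dv]] := PID P0 PC.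
have [c0 [c0V c0d c0nil]] : exists c0, [/\ inV Y' c0, coef (bd c0) y = d & d = 0 -> c0 = [::]].
  case: (eqVneq d 0) => [d0|dn0].
    exists [::]; split => //; [apply: inV_nil | by rewrite /bd /= coef_nil d0].
  case: Pd => c0 [c0V c0d]; exists c0; split => // d0; by rewrite d0 eqxx in dn0.
pose q := fun c => match pselect (exists q, coef (bd c) y = q * d) with
  left H => sval (cid H) | right _ => 0 end.
have qP : forall c, inV Y' c -> coef (bd c) y = q c * d.
  move=> c cV; rewrite /q; case: pselect => [H|[]]; first by case: (cid H).
  by apply: dv; exists c.
pose L' := fun c => L (c ++ scale (- q c) c0).
have HY : forall t, Y' t -> t != y -> Y t.
  by move=> t [Yt _|->]; [exact: Yt | rewrite eqxx].
have key : forall c r, inV Y' c -> coef (bd c) y = r * d ->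
    inV Y (c ++ scale (- r) c0) /\ L' c = L (c ++ scale (- r) c0).
  move=> c r cV cr; split.
    case: (cV) => nc Hc; case: (c0V) => nc0 Hc0; split.
      by rewrite is_nchain_cat is_nchain_scale nc nc0.
    move=> t nz; case: (eqVneq t y) => [ety|ty].
      by move: nz; rewrite ety coef_bd_cat coef_bd_scale cr c0d mulNr addrN eqxx.
    move: nz; rewrite coef_bd_cat coef_bd_scale.
    case: (eqVneq (coef (bd c) t) 0) => [->|nzc]; last by move=> _; apply: HY (Hc _ nzc) ty.
    rewrite add0r; case: (eqVneq (coef (bd c0) t) 0) => [->|nzc0]; first by rewrite mulr0 eqxx.
    by move=> _; apply: HY (Hc0 _ nzc0) ty.
  rewrite /L'; case: (eqVneq d 0) => [d0|dn0]; first by rewrite (c0nil d0).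
  by congr (L (c ++ scale (- _) c0)); apply: (mulIf dn0); rewrite -qP.
have good' : goodL Y' L'.
  split.
  - move=> c c' cV c'V.
    have [V1 E1] := key c (q c) cV (qP c cV).
    have [V2 E2] := key c' (q c') c'V (qP c' c'V).
    have ccV := inV_cat cV c'V.
    have [V3 E3] := key (c ++ c') (q c + q c') ccV
      ltac:(by rewrite coef_bd_cat !qP // mulrDl).
    rewrite E3 E1 E2 -L1 //; apply: L3 => //; first exact: inV_cat.
    by move=> t; rewrite !(coef_cat, coef_scale); ring.
  - move=> a c cV; have sV := inV_scale a cV.
    have [V1 E1] := key c (q c) cV (qP c cV).
    have [V2 E2] := key (scale a c) (a * q c) sV
      ltac:(by rewrite coef_bd_scale qP // mulrA).
    rewrite E2 /L' -L2 //; apply: L3 => //; first exact: inV_scale.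
    by move=> t; rewrite !(coef_cat, coef_scale); ring.
  - move=> c c' cV c'V E.
    have [V1 E1] := key c (q c) cV (qP c cV).
    have [V2 E2] := key c' (q c) c'V ltac:(by rewrite -(coef_bd_eq E) qP).
    rewrite E1 E2; apply: L3 => // t.
    by rewrite !coef_cat !coef_scale E.
  - move=> c cc.
    have cV : inV Y' c by apply: inV_mono cc.
    have pc : coef (bd c) y = 0 * d.
      by rewrite mul0r; apply/eqP; apply: contraT => /(proj2 cc).
    have [V1 E1] := key c 0 cV pc.
    rewrite E1 -(L4 c cc); apply: L3 => //; first by apply: inV_mono cc.
    by move=> t; rewrite coef_cat coef_scale oppr0 mul0r addr0.
exists (exist _ (Y', L') good'); split; last by right.
split=> [t Yt|c cV]; first by left.
have pc : coef (bd c) y = 0 * d.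
  rewrite mul0r; apply/eqP; apply: contraT => /(proj2 cV) Yy.
  by case: ny.
have cV' : inV Y' c by apply: inV_mono cV => t Yt; left.
have [V1 E1] := key c 0 cV' pc.
rewrite /= E1; apply: L3 => //.
by move=> t; rewrite coef_cat coef_scale oppr0 mul0r addr0.
Qed.

Theorem CE_exists : exists u : seq G -> R, forall c, is_nchain n c ->
  (forall t, coef (bd c) t = 0) -> pair idfun u c = lam c.
Proof.
have rf : forall s, leC s s by move=> s; split.
have tr : forall r s t, leC r s -> leC s t -> leC r t.
  move=> r s t [h1 h2] [h3 h4]; split=> [x hx|c cc]; first by apply: h3; apply: h1.
  by rewrite h2 // h4 //; apply: inV_mono cc.
have [s Hs] := @zorn_gen stateC s0C leC rf tr chainC.
have [L1 L2 L3 L4] := svalP s.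
have allY : forall t, (sval s).1 t.
  move=> t; case: (pselect ((sval s).1 t)) => // nt.
  have [s' [les ys]] := extC nt; have [sub _] := Hs s' les; exact: sub _ ys.
have allV : forall c, is_nchain n c -> inV (sval s).1 c by move=> c nc; split.
exists (fun t => (sval s).2 [:: (1, t)]).
have E : forall c, is_nchain n c -> pair idfun (fun t => (sval s).2 [:: (1, t)]) c = (sval s).2 c.
  elim=> [|x c IH]; first by move=> _; rewrite pair_nil; move: (L2 0 [::] (allV [::] isT)); rewrite mul0r /= => ->.
  rewrite /is_nchain /= => /andP[xn cn].
  have x1 : is_nchain n [:: (1, x.2)] by rewrite /is_nchain /= xn.
  have x1' : is_nchain n [:: x] by rewrite /is_nchain /= xn.
  rewrite -cat1s pair_cat IH // L1 ?allV //; congr (_ + _).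
  case: x xn x1 x1' => a t xn x1 x1'; rewrite pair_single /= -L2 ?allV //; apply: L3; rewrite ?allV //.
  by move=> t'; rewrite /scale /= !coef_cons !coef_nil mulr1.
move=> c nc cyc; rewrite E // L4 //; split=> // t.
by rewrite cyc eqxx.
Qed.

End CE.

Section LP.
Variables (R : idomainType) (K : fieldType) (iota : {rmorphism R -> K}).
Hypothesis iota_inj : forall r, iota r = 0 -> r = 0.
Variables (G : groupType) (m : nat) (f : seq G -> K).
Hypothesis hf : forall c : chain R G, is_nchain m.+1 c ->
  (forall t, coef (bd c) t = 0) -> pair iota f c = 0.

Lemma pair_upd (h : seq G -> K) x a (c : chain R G) :
  pair iota (fun t => if t == x then a else h t) c =
  pair iota (fun t => if t == x then 0 else h t) c + iota (coef c x) * a.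
Proof.
elim: c => [|[r u] c IH]; first by rewrite !pair_nil coef_nil rmorph0 mul0r addr0.
rewrite -cat1s !pair_cat IH coef_cat rmorphD mulrDl !pair_single /coef big_cons big_nil /=.
by rewrite -/(coef c x); case: eqP => _; rewrite ?addr0 ?rmorph0 ?mulr0 ?mul0r ?add0r; ring.
Qed.

Lemma pair_bd_scale (h : seq G -> K) r (c : chain R G) :
  pair iota h (bd (scale r c)) = iota r * pair iota h (bd c).
Proof. by rewrite !pair_bd pair_scale. Qed.

Definition inW (D : seq G -> Prop) (c : chain R G) :=
  is_nchain m.+1 c /\ forall t, coef (bd c) t != 0 -> D t.

Definition goodH (D : seq G -> Prop) (h : seq G -> K) :=
  forall c, inW D c -> pair iota h (bd c) = pair iota f c.

Definition stateH := {p : (seq G -> Prop) * (seq G -> K) | goodH p.1 p.2}.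
Definition leH (s s' : stateH) :=
  (forall t, (sval s).1 t -> (sval s').1 t) /\
  (forall t, (sval s).1 t -> (sval s).2 t = (sval s').2 t).

Lemma goodH0 : goodH (fun _ => False) (fun _ => 0).
Proof.
move=> c [nc Hc]; rewrite hf //; last first.
  by move=> t; apply/eqP; apply: contraT => /Hc.
by rewrite /pair big1 // => x _; rewrite mulr0.
Qed.

Definition s0H : stateH := exist _ (fun _ => False, fun _ => 0) goodH0.

Lemma inW_slist D c : inW D c <-> is_nchain m.+1 c /\ forall t, t \in slist c -> D t.
Proof.
split=> [[nc Hc]|[nc Hc]]; split=> // t.
  by rewrite mem_filter => /andP[/Hc].
move=> nz; apply: Hc; rewrite mem_filter nz /=.
by apply: contraR nz => /coef_notin ->.
Qed.

Section ChainH.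
Variable A : stateH -> Prop.
Hypothesis tot : forall s t, A s -> A t -> leH s t \/ leH t s.
Hypothesis A0 : A s0H.

Definition Dstar t := exists s, A s /\ (sval s).1 t.
Definition hstar t := match pselect (exists s, A s /\ (sval s).1 t) with
  | left H => (sval (sval (cid H))).2 t | right _ => 0 end.

Lemma hstar_eq s t : A s -> (sval s).1 t -> hstar t = (sval s).2 t.
Proof.
move=> As ts; rewrite /hstar; case: pselect => [H|[]]; last by exists s.
case: (cid H) => s' [As' ts'] /=.
by have [[_ E]|[_ E]] := tot As As'; [rewrite E|rewrite E].
Qed.

Lemma goodHstar : goodH Dstar hstar.
Proof.
move=> c /inW_slist [nc Hc].
have [s [As Hs]] := @cover_list _ _ A leH (fun s t => (sval s).1 t) tot
  (fun s t x le => proj1 le x) (slist c) s0H A0 Hc.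
have cs : inW (sval s).1 c by apply/inW_slist.
rewrite -(svalP s c cs); apply: pair_supp => t nz.
by apply: hstar_eq => //; apply: (proj2 cs).
Qed.

Definition sHstar : stateH := exist _ (Dstar, hstar) goodHstar.

Lemma sHstar_ub s : A s -> leH s sHstar.
Proof.
move=> As; split=> /= [t Dt|t Dt]; first by exists s.
by rewrite (hstar_eq As).
Qed.

End ChainH.

Lemma chainH (A : stateH -> Prop) : (forall s t, A s -> A t -> leH s t \/ leH t s) ->
  exists ub, forall s, A s -> leH s ub.
Proof.
move=> tot; pose A' := fun s => A s \/ s = s0H.
have le0 : forall s, leH s0H s by move=> s; split.
have tot' : forall s t, A' s -> A' t -> leH s t \/ leH t s.
  move=> s t [As|->] [At|->]; first exact: tot.
  - by right; apply: le0.
  - by left; apply: le0.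
  - by left; apply: le0.
have A0 : A' s0H by right.
by exists (sHstar tot' A0) => s As; apply: sHstar_ub; left.
Qed.

Lemma extH (s : stateH) x : ~ (sval s).1 x -> exists s', leH s s' /\ (sval s').1 x.
Proof.
move=> nx.
have gs := svalP s.
move: gs nx; set D := (sval s).1; set h := (sval s).2 => gs nx.
pose D' := fun t => D t \/ t = x.
have HD : forall t, D' t -> t != x -> D t.
  by move=> t [Dt _|->]; [exact: Dt | rewrite eqxx].
case: (pselect (exists c0, inW D' c0 /\ coef (bd c0) x != 0)) => [[c0 [c0W dd0]]|noc].
  set dd := coef (bd c0) x in dd0.
  have idd : iota dd != 0 by apply/eqP => /iota_inj; apply/eqP.
  pose h0 := fun t => if t == x then 0 else h t.
  pose a := (pair iota f c0 - pair iota h0 (bd c0)) / iota dd.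
  pose h' := fun t => if t == x then a else h t.
  have agree : forall c, inW D c -> pair iota h' (bd c) = pair iota h (bd c).
    move=> c [_ Hc]; apply: pair_supp => t /Hc Dt; rewrite /h'.
    by case: eqP => // etx; case: nx; rewrite -etx.
  have hc0 : pair iota h' (bd c0) = pair iota f c0.
    rewrite /h' pair_upd -/h0 -/dd /a mulrC mulfVK //.
    by rewrite addrC subrK.
  have good' : goodH D' h'.
    move=> c cW; set e := coef (bd c) x.
    pose c2 := scale dd c ++ scale (- e) c0.
    have c2W : inW D c2.
      case: cW => nc Hc; case: c0W => nc0 Hc0; split.
        by rewrite is_nchain_cat !is_nchain_scale nc nc0.
      move=> t nz; case: (eqVneq t x) => [etx|tx].
        by move: nz; rewrite etx coef_bd_cat !coef_bd_scale -/e -/dd mulNr mulrC addrN eqxx.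
      move: nz; rewrite coef_bd_cat !coef_bd_scale.
      case: (eqVneq (coef (bd c) t) 0) => [->|nzc]; last by move=> _; apply: HD (Hc _ nzc) tx.
      rewrite mulr0 add0r; case: (eqVneq (coef (bd c0) t) 0) => [->|nzc0]; first by rewrite mulr0 eqxx.
      by move=> _; apply: HD (Hc0 _ nzc0) tx.
    have E2 := gs c2 c2W.
    rewrite -agree // /c2 bd_cat !pair_cat !pair_bd_scale hc0 in E2.
    rewrite !pair_scale in E2.
    move/eqP: E2; rewrite -subr_eq0 opprD addrACA -mulrBr subrr addr0.
    by rewrite mulf_eq0 (negbTE idd) /= subr_eq0 => /eqP.
  exists (exist _ (D', h') good'); split; last by right.
  split=> [t Dt|t Dt]; first by left.
  by rewrite /= /h'; case: eqP => // etx; case: nx; rewrite -etx.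
have good' : goodH D' h.
  move=> c [nc Hc]; apply: gs; split=> // t nz.
  apply: HD (Hc _ nz) _; apply/eqP => etx; apply: noc; exists c; split; first by split.
  by rewrite -etx.
exists (exist _ (D', h) good'); split; last by right.
by split=> [t Dt|t Dt]; first by left.
Qed.

Theorem LP_exists : exists h : seq G -> K, forall g, size g = m.+1 -> f g = cdelta h g.
Proof.
have rf : forall s, leH s s by move=> s; split.
have tr : forall r s t, leH r s -> leH s t -> leH r t.
  move=> r s t [h1 h2] [h3 h4]; split=> [y hy|y hy]; first by apply: h3; apply: h1.
  by rewrite h2 // h4 //; apply: h1.
have [s Hs] := @zorn_gen stateH s0H leH rf tr chainH.
have allD : forall t, (sval s).1 t.
  move=> t; case: (pselect ((sval s).1 t)) => // nt.
  have [s' [les ys]] := extH nt; have [sub _] := Hs s' les; exact: sub _ ys.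
exists (sval s).2 => g sg.
rewrite (cdelta_pair iota) (svalP s) ?pair_single ?rmorph1 ?mul1r //.
by split=> //; rewrite /is_nchain /= sg eqxx.
Qed.

End LP.

Section AbsLemmas.
Variables (K : fieldType) (V : realType) (absK : K -> V).
Hypothesis na : nonarch_abs absK.

Lemma abs0 : absK 0 = 0.
Proof. by case: na => _ H _ _; apply/H. Qed.

Lemma abs_ge0 x : 0 <= absK x.
Proof. by case: na. Qed.

Lemma abs_sum_le (N : nat) (x : nat -> K) :
  absK (\sum_(j < N) x j) <= \sum_(j < N) absK (x j).
Proof.
apply: (big_ind2 (fun s y => absK y <= s)); first by rewrite abs0.
  move=> x1 x2 y1 y2 h1 h2; case: na => _ _ _ ult.
  apply: le_trans (ult _ _) _; rewrite ge_max; apply/andP; split.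
    by rewrite -[absK x2]addr0 lerD // (le_trans (abs_ge0 _) h2).
  by rewrite -[absK y2]add0r lerD // (le_trans (abs_ge0 _) h1).
by [].
Qed.

End AbsLemmas.

Section PairLin.
Variables (R : comNzRingType) (K : fieldType) (iota : {rmorphism R -> K}) (G : groupType).

Lemma pair_fsub (f g : seq G -> K) (c : chain R G) :
  pair iota (fun t => f t - g t) c = pair iota f c - pair iota g c.
Proof. by rewrite /pair -sumrB; apply: eq_bigr => x _; rewrite mulrBr. Qed.

Lemma pair_fcomb N (a : nat -> K) (U : nat -> seq G -> R) (c : chain R G) :
  pair iota (fun t => \sum_(j < N) a j * iota (U j t)) c =
  \sum_(j < N) a j * iota (pair idfun (U j) c).
Proof.
rewrite /pair; under eq_bigr => x _ do rewrite mulr_sumr.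
rewrite exchange_big /=; apply: eq_bigr => j _.
rewrite rmorph_sum mulr_sumr; apply: eq_bigr => x _.
by rewrite rmorphM /= mulrCA.
Qed.

Lemma cdelta_sub (f g : seq G -> K) t :
  cdelta (fun s => f s - g s) t = cdelta f t - cdelta g t.
Proof. by rewrite /cdelta -sumrB; apply: eq_bigr => i _; rewrite mulrBr. Qed.

Lemma pair_cocycle (f : seq G -> K) n (b : chain R G) :
  is_ncocycle n f -> is_nchain n.+1 b -> pair iota f (bd b) = 0.
Proof.
move=> cf nb; rewrite pair_bd /pair big_seq big1 // => x xb.
have /allP/(_ x xb)/eqP sx := nb.
by rewrite cf // mulr0.
Qed.

End PairLin.

Section Lin.
Variables (R : comNzRingType) (G : groupType) (zs : seq (chain R G)).
Local Notation k := (size zs).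

Definition lin (r : nat -> R) : chain R G :=
  flatten [seq scale (r i) (nth [::] zs i) | i <- iota 0 k].

Lemma coef_lin r t : coef (lin r) t = \sum_(i < k) r i * coef (nth [::] zs i) t.
Proof.
rewrite /coef /lin big_flatten big_map -(big_mkord xpredT (fun i => r i * coef (nth [::] zs i) t)).
rewrite /index_iota subn0; apply: eq_bigr => i _.
by rewrite big_map mulr_sumr.
Qed.

Lemma pair_lin (S : comNzRingType) (rho : {rmorphism R -> S}) f r :
  pair rho f (lin r) = \sum_(i < k) rho (r i) * pair rho f (nth [::] zs i).
Proof.
rewrite /pair /lin big_flatten big_map -(big_mkord xpredT (fun i => rho (r i) * pair rho f (nth [::] zs i))).
rewrite /index_iota subn0; apply: eq_bigr => i _.
rewrite -/(pair rho f (scale (r i) (nth [::] zs i))).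
by rewrite pair_scale.
Qed.

Lemma lin_nchain n r : (forall i, (i < k)%N -> is_nchain n (nth [::] zs i)) -> is_nchain n (lin r).
Proof.
move=> H; rewrite /lin.
have : forall c, c \in [seq scale (r i) (nth [::] zs i) | i <- iota 0 k] -> is_nchain n c.
  move=> c /mapP[i]; rewrite mem_iota add0n => /andP[_ ik] ->.
  by rewrite is_nchain_scale; apply: H.
elim: [seq _ | i <- _] => [|c L IH] HL //=.
rewrite is_nchain_cat HL ?mem_head ?IH // => c' c'L.
by apply: HL; rewrite inE c'L orbT.
Qed.

End Lin.

Section Main.
Variables (R : idomainType) (K : fieldType) (V : realType) (absK : K -> V).
Variable (iota : {rmorphism R -> K}).
Hypothesis iota_inj : forall r, iota r = 0 -> r = 0.
Hypothesis iota_bd : forall r, absK (iota r) <= 1.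
Hypothesis na : nonarch_abs absK.
Hypothesis PID : forall P : R -> Prop, P 0 ->
  (forall a b x y, P x -> P y -> P (a * x + b * y)) ->
  exists d, P d /\ forall x, P x -> exists q, x = q * d.
Variables (G : groupType).

Theorem main_gen n : homology_fg R G n -> comparison_surjective absK G n.
Proof.
case: n => [|m] fg f fc.
  exists f; split=> //.
    exists (absK (f [::])) => g; case: g => // _.
  by exists (fun _ => 0) => g _; rewrite subrr.
set n := m.+1.
case: fg => zs [zsC zsR].
set k := size zs.
pose z i := nth [::] zs i.
pose Rep c (r : nat -> R) := exists b, is_nchain n.+1 b /\
  forall t, coef c t = \sum_(i < k) r i * coef (z i) t + coef (bd b) t.
pose W (r : nat -> R) := exists b, is_nchain n.+1 b /\
  forall t, \sum_(i < k) r i * coef (z i) t + coef (bd b) t = 0.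
have WC : vclosed W.
  move=> a b w w' [b1 [n1 H1]] [b2 [n2 H2]].
  exists (scale a b1 ++ scale b b2); split.
    by rewrite is_nchain_cat !is_nchain_scale n1 n2.
  move=> t; rewrite coef_bd_cat !coef_bd_scale.
  have E : \sum_(i < k) (a * w i + b * w' i) * coef (z i) t =
     a * \sum_(i < k) w i * coef (z i) t + b * \sum_(i < k) w' i * coef (z i) t.
    rewrite !mulr_sumr -big_split /=; apply: eq_bigr => i _; ring.
  rewrite E; have := H1 t; have := H2 t.
  move=> h2 h1; apply/eqP; rewrite -[_ == 0]/(_ == _).
  by apply/eqP; transitivity (a * (\sum_(i < k) w i * coef (z i) t + coef (bd b1) t) +
       b * (\sum_(i < k) w' i * coef (z i) t + coef (bd b2) t)); [ring | rewrite h1 h2; ring].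
have [es [orth span]] := FA iota_inj k WC.
have [F HF] : {F : chain R G -> nat -> R & forall c, is_ncycle n c -> Rep c (F c)}.
  apply: (@choice _ _ (fun c r => is_ncycle n c -> Rep c r)) => c; case: (pselect (is_ncycle n c)) => [cc|ncc]; last by exists (fun _ => 0).
  have [rs [b [srs [nb Hb]]]] := zsR c cc.
  by exists (fun i => rs`_i) => _; exists b; split.
have RepW : forall c r r', Rep c r -> Rep c r' -> W (fun i => r i - r' i).
  move=> c r r' [b1 [n1 H1]] [b2 [n2 H2]]; exists (b1 ++ scale (-1) b2); split.
    by rewrite is_nchain_cat is_nchain_scale n1 n2.
  move=> t; rewrite coef_bd_cat coef_bd_scale.
  have := H1 t; have := H2 t => h2 h1.
  under eq_bigr => i _ do rewrite mulrBl.
  rewrite sumrB; apply/eqP; rewrite -subr_eq0 subr0; apply/eqP.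
  have E : forall x y u v : R, x = y + u -> x = v + (- 1) * (- (v - y - u)) -> True by [].
  move: h1 h2; set A1 := \sum_(i < k) r i * coef (z i) t; set A2 := \sum_(i < k) r' i * coef (z i) t.
  move=> h1 h2; have : A1 - A2 = coef (bd b2) t - coef (bd b1) t.
    by rewrite -[A1](addrK (coef (bd b1) t)) -h1 h2; ring.
  by move=> ->; ring.
pose e j := nth (fun _ => 0) es j.
pose lam j c := \sum_(i < k) F c i * e j i.
have lam_rep : forall j c r, (j < size es)%N -> is_ncycle n c -> Rep c r ->
    lam j c = \sum_(i < k) r i * e j i.
  move=> j c r js cc rc; apply/eqP; rewrite -subr_eq0 -sumrB.
  under eq_bigr => i _ do rewrite -mulrBl.
  by apply/eqP; apply: (orth j js (fun i => F c i - r i)); apply: RepW (HF c cc) rc.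
have cyc_ok : forall c : chain R G, cyc0 n c -> is_ncycle n c.
  move=> c [nc Hc]; split; first exact: nc.
  by move=> _ t; apply/eqP; apply: contraT => /Hc [].
have Rep_cat : forall c c' r r', Rep c r -> Rep c' r' -> Rep (c ++ c') (fun i => r i + r' i).
  move=> c c' r r' [b1 [n1 H1]] [b2 [n2 H2]]; exists (b1 ++ b2); split.
    by rewrite is_nchain_cat n1 n2.
  move=> t; rewrite coef_cat coef_bd_cat H1 H2.
  under [in RHS]eq_bigr => i _ do rewrite mulrDl.
  by rewrite big_split /=; ring.
have Rep_scale : forall a c r, Rep c r -> Rep (scale a c) (fun i => a * r i).
  move=> a c r [b1 [n1 H1]]; exists (scale a b1); split; first by rewrite is_nchain_scale.
  move=> t; rewrite coef_scale coef_bd_scale H1 mulrDr mulr_sumr.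
  by congr (_ + _); apply: eq_bigr => i _; rewrite mulrA.
have Rep_eq : forall c c' r, (forall t, coef c t = coef c' t) -> Rep c r -> Rep c' r.
  by move=> c c' r E [b1 [n1 H1]]; exists b1; split=> // t; rewrite -E.
have [U HU] : {U : nat -> seq G -> R & forall j, (j < size es)%N ->
    forall c, is_nchain n c -> (forall t, coef (bd c) t = 0) -> pair idfun (U j) c = lam j c}.
  apply: (@choice _ _ (fun j u => (j < size es)%N ->
    forall c, is_nchain n c -> (forall t, coef (bd c) t = 0) -> pair idfun u c = lam j c)) => j.
  case: (pselect (j < size es)%N) => [js|njs]; last first.
    by exists (fun _ => 0) => /njs.
  have hD : forall c c', cyc0 n c -> cyc0 n c' -> lam j (c ++ c') = lam j c + lam j c'.
    move=> c c' cc cc'; rewrite (lam_rep j c (fun i => F c i) js (cyc_ok c cc) (HF c (cyc_ok c cc))).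
    rewrite (lam_rep j c' (fun i => F c' i) js (cyc_ok c' cc') (HF c' (cyc_ok c' cc'))).
    rewrite (lam_rep j (c ++ c') (fun i => F c i + F c' i) js).
    + by rewrite -big_split /=; apply: eq_bigr => i _; rewrite mulrDl.
    + by apply: cyc_ok; apply: inV_cat.
    + by apply: Rep_cat; apply: HF; apply: cyc_ok.
  have hZ : forall r c, cyc0 n c -> lam j (scale r c) = r * lam j c.
    move=> r c cc; rewrite (lam_rep j c (fun i => F c i) js (cyc_ok c cc) (HF c (cyc_ok c cc))).
    rewrite (lam_rep j (scale r c) (fun i => r * F c i) js).
    + by rewrite mulr_sumr; apply: eq_bigr => i _; rewrite mulrA.
    + by apply: cyc_ok; apply: inV_scale.
    + by apply: Rep_scale; apply: HF; apply: cyc_ok.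
  have hE : forall c c', cyc0 n c -> cyc0 n c' -> (forall t, coef c t = coef c' t) -> lam j c = lam j c'.
    move=> c c' cc cc' E; rewrite (lam_rep j c (fun i => F c i) js (cyc_ok c cc) (HF c (cyc_ok c cc))).
    rewrite (lam_rep j c' (fun i => F c i) js (cyc_ok c' cc')) //.
    by apply: Rep_eq E _; apply: HF; apply: cyc_ok.
  have [u Hu] := @CE_exists R G n (lam j) PID hD hZ hE.
  by exists u => _; apply: Hu.
have bd1_ok : forall g : seq G, size g = n.+1 ->
    is_nchain n (bd [:: (1 : R, g)]) /\ forall t, coef (bd (bd [:: (1 : R, g)])) t = 0.
  move=> g sg; split; last by move=> t; apply: bdbd; rewrite sg.
  rewrite bd_single /is_nchain all_map; apply/allP => i; rewrite mem_iota add0n /= => iN.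
  by rewrite (@size_face _ g n) //; rewrite sg in iN.
have U1 : forall j, (j < size es)%N -> forall g : seq G, size g = n.+1 ->
    pair idfun (U j) (bd [:: (1 : R, g)]) = 0.
  move=> j js g sg; have [nb cb] := bd1_ok g sg.
  rewrite HU // (lam_rep j _ (fun _ => 0) js).
  - by rewrite big1 // => i _; rewrite mul0r.
  - by split=> // _; exact: cb.
  - exists [:: (1, g)]; split; first by rewrite /is_nchain /= sg eqxx.
    by move=> t; rewrite big1 ?add0r // => i _; rewrite mul0r.
have U2 : forall j i, (j < size es)%N -> (i < k)%N -> pair idfun (U j) (z i) = e j i.
  move=> j i js ik; have [zn zc] := zsC i ik.
  rewrite HU //; last by apply: zc.
  rewrite (lam_rep j _ (fun l => if l == i then 1 else 0) js (zsC i ik)).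
    rewrite (bigD1 (Ordinal ik)) //= eqxx mul1r big1 ?addr0 // => l /eqP nl.
    case: eqP => [el|]; last by rewrite mul0r.
    by case: nl; apply: val_inj; rewrite /= el.
  exists [::]; split => // t; rewrite /bd /= coef_nil addr0.
  rewrite (bigD1 (Ordinal ik)) //= eqxx mul1r big1 ?addr0 // => l /eqP nl.
  case: eqP => [el|]; last by rewrite mul0r.
  by case: nl; apply: val_inj; rewrite /= el.
pose v i := pair iota f (z i).
have vW : forall w, W w -> \sum_(i < k) iota (w i) * v i = 0.
  move=> w [b [nb Hb]].
  rewrite -(pair_lin zs iota f w) (@pair_coef_eq _ _ _ _ _ _ (scale (-1) (bd b))).
    by rewrite pair_scale (pair_cocycle iota fc nb) mulr0.
  by move=> t; rewrite coef_lin coef_scale mulN1r; apply/eqP; rewrite -addr_eq0; apply/eqP; apply: Hb.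
have [a Ha] := span v vW.
pose fb := fun g => \sum_(j < size es) a j * iota (U j g).
have fbc : is_ncocycle n fb.
  move=> g sg; rewrite (cdelta_pair iota) pair_fcomb big1 // => j _.
  by rewrite U1 // rmorph0 mulr0.
pose phi := fun g => f g - fb g.
have phic : is_ncocycle n phi by move=> g sg; rewrite cdelta_sub fc // fbc // subrr.
have hf : forall c : chain R G, is_nchain m.+1 c -> (forall t, coef (bd c) t = 0) ->
    pair iota phi c = 0.
  move=> c nc cc.
  have [rs [b [srs [nb Hb]]]] := zsR c (conj nc (fun _ => cc)).
  rewrite (@pair_coef_eq _ _ _ _ _ _ (lin zs (fun i => rs`_i) ++ bd b)); last first.
    by move=> t; rewrite coef_cat coef_lin Hb.
  rewrite pair_cat (pair_cocycle iota phic nb) addr0 pair_lin big1 // => i _.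
  rewrite pair_fsub pair_fcomb -/(v i).
  rewrite (eq_bigr (fun j : 'I_(size es) => a j * iota (e j i))).
    by rewrite -(Ha i (ltn_ord i)) subrr mulr0.
  by move=> j _; rewrite (U2 j i (ltn_ord j) (ltn_ord i)).
have [h Hh] := LP_exists iota_inj hf.
exists fb; split => //.
  exists (\sum_(j < size es) absK (a j)) => g _.
  apply: le_trans (abs_sum_le na (size es) (fun j => a j * iota (U j g))) _.
  apply: ler_sum => j _; case: na => _ _ am _; rewrite am.
  by rewrite -[X in _ <= X]mulr1 ler_wpM2l ?(abs_ge0 na).
by exists h => g sg; rewrite -Hh.
Qed.
End Main.

Section FpMorph.
Variables (p : nat) (K : fieldType).
Hypothesis chK : p \in [pchar K].

Definition fpK (x : 'F_p) : K := let _ := chK in (x : nat)%:R.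

Lemma fp_cast : (Zp_trunc (pdiv p)).+2 = p.
Proof. by rewrite Fp_cast // (pcharf_prime chK). Qed.

Lemma fp0 : ((Zp_trunc (pdiv p)).+2)%:R = 0 :> K.
Proof. by rewrite fp_cast (pcharf0 chK). Qed.

Lemma natr_modP m : (m %% (Zp_trunc (pdiv p)).+2)%:R = m%:R :> K.
Proof. by rewrite [in RHS](divn_eq m (Zp_trunc (pdiv p)).+2) natrD natrM fp0 mulr0 add0r. Qed.

Fact fpK_zmod : zmod_morphism fpK.
Proof.
move=> x y; rewrite /fpK /= natr_modP natrD natr_modP natrB ?fp0 ?sub0r //.
by apply: ltnW; apply: ltn_ord.
Qed.

Fact fpK_monoid : monoid_morphism fpK.
Proof.
split; first by rewrite /fpK /= natr_modP.
by move=> x y; rewrite /fpK /= natr_modP natrM.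
Qed.

HB.instance Definition _ := GRing.isZmodMorphism.Build 'F_p K fpK fpK_zmod.
HB.instance Definition _ := GRing.isMonoidMorphism.Build 'F_p K fpK fpK_monoid.

Lemma fpK_inj x : fpK x = 0 -> x = 0.
Proof.
rewrite /fpK => /eqP; rewrite -(dvdn_pcharf chK) => dv.
apply: val_inj => /=; have xp : ((x : nat) < p)%N := leq_trans (ltn_ord x) (eq_leq fp_cast).
case: (posnP (x : nat)) => // x0.
by have := dvdn_leq x0 dv; lia.
Qed.

End FpMorph.

Section RatMorph.
Variables (K : fieldType).
Hypothesis ch0 : [pchar K] =i pred0.

Definition ratK (x : rat) : K := let _ := ch0 in (numq x)%:~R / (denq x)%:~R.

Lemma nz_intK (z : int) : z != 0 -> z%:~R != 0 :> K.
Proof.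
case: z => [d|d] nz /=.
  have := (pcharf0P K).1 ch0 d; rewrite /= => ->; by apply: contra nz => /eqP ->.
rewrite NegzE rmorphN oppr_eq0 /=.
by have := (pcharf0P K).1 ch0 d.+1 => /= ->.
Qed.

Lemma nz_den x : (denq x)%:~R != 0 :> K.
Proof. by apply: nz_intK; rewrite denq_eq0. Qed.

Fact ratK_zmod : zmod_morphism ratK.
Proof.
have injZtoQ: @injective rat int intr by apply: intr_inj.
move=> x y; rewrite /ratK.
apply: (canLR (mulfK (nz_den _))); apply: (mulIf (nz_den x)).
rewrite mulrAC mulrBl divfK ?nz_den // mulrAC -!rmorphM.
apply: (mulIf (nz_den y)); rewrite mulrAC mulrBl divfK ?nz_den //.
rewrite -!(rmorphM, rmorphB); congr _%:~R; apply: injZtoQ.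
rewrite !(rmorphM, rmorphB) /= [_ - _]lock /= -lock !numqE.
by rewrite (mulrAC y) -!mulrBl -mulrA mulrAC !mulrA.
Qed.

Fact ratK_monoid : monoid_morphism ratK.
Proof.
have injZtoQ: @injective rat int intr by apply: intr_inj.
split=> [|x y]; first by rewrite /ratK divr1.
rewrite /ratK mulrC mulrAC; apply: canLR (mulKf (nz_den _)) _; rewrite !mulrA.
do 2!apply: canRL (mulfK (nz_den _)) _; rewrite -!rmorphM; congr _%:~R.
apply: injZtoQ; rewrite !rmorphM [x * y]lock /= !numqE -lock.
by rewrite -!mulrA mulrA mulrCA -!mulrA (mulrCA y).
Qed.

HB.instance Definition _ := GRing.isZmodMorphism.Build rat K ratK ratK_zmod.
HB.instance Definition _ := GRing.isMonoidMorphism.Build rat K ratK ratK_monoid.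

Lemma ratK_inj x : ratK x = 0 -> x = 0.
Proof.
rewrite /ratK => /eqP; rewrite mulf_eq0 invr_eq0 (negbTE (nz_den x)) orbF.
case: (eqVneq (numq x) 0) => [/eqP|nz]; first by rewrite numq_eq0 => /eqP.
by rewrite (negbTE (nz_intK nz)).
Qed.

Lemma intK_inj (z : int) : (z%:~R : K) = 0 -> z = 0.
Proof. by case: (eqVneq z 0) => // /nz_intK /eqP. Qed.

End RatMorph.

Section AbsMore.
Variables (K : fieldType) (V : realType) (absK : K -> V).
Hypothesis na : nonarch_abs absK.

Lemma abs1 : absK 1 = 1.
Proof.
case: na => _ h0 hM _.
have nz : absK 1 != 0 by apply/eqP => /h0 /eqP; rewrite oner_eq0.
by apply: (mulIf nz); rewrite -hM !mul1r.
Qed.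

Lemma absN1 : absK (-1) = 1.
Proof.
case: na => hp _ hM _.
have : absK (-1) ^+ 2 == 1 by rewrite expr2 -hM mulN1r opprK abs1.
rewrite sqrf_eq1 => /orP[/eqP//|/eqP h].
by have := hp (-1); rewrite h ler0N1.
Qed.

Lemma absN x : absK (- x) = absK x.
Proof. by case: na => _ _ hM _; rewrite -mulN1r hM absN1 mul1r. Qed.

Lemma abs_nat n : absK n%:R <= 1.
Proof.
elim: n => [|n IH]; first by rewrite (abs0 na) ler01.
case: na => _ _ _ hU; rewrite -natr1; apply: le_trans (hU _ _) _.
by rewrite ge_max IH abs1 lexx.
Qed.

Lemma abs_int (z : int) : absK z%:~R <= 1.
Proof. by case: z => n; [exact: abs_nat | rewrite NegzE rmorphN absN; exact: abs_nat]. Qed.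

Lemma abs_inv x : x != 0 -> absK x^-1 = (absK x)^-1.
Proof.
move=> nx; case: na => _ h0 hM _.
have ax : absK x != 0 by apply/eqP => /h0 /eqP; rewrite (negbTE nx).
by apply: (mulfI ax); rewrite -hM !divff // abs1.
Qed.

Lemma abs_rat (ch0 : [pchar K] =i pred0) (rc0 : residue_char_zero absK) x :
  absK (@ratK K ch0 x) <= 1.
Proof.
have aden : absK ((denq x)%:~R) = 1.
  have := denq_gt0 x; case: (denq x) => [d|d] //= d0.
  have := abs_nat d; rewrite le_eqVlt => /orP[/eqP//|lt].
  by case: (rc0 d d0).
case: na => hp _ hM _.
rewrite /ratK hM abs_inv ?nz_den // aden invr1 mulr1; exact: abs_int.
Qed.

End AbsMore.

Lemma PID_field (F : fieldType) : forall P : F -> Prop, P 0 ->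
  (forall a b x y, P x -> P y -> P (a * x + b * y)) ->
  exists d, P d /\ forall x, P x -> exists q, x = q * d.
Proof.
move=> P P0 PC; case: (pselect (exists x, P x /\ x != 0)) => [[x [Px nx]]|none].
  by exists x; split=> // y _; exists (y / x); rewrite mulfVK.
exists 0; split=> // y Py; exists 0; rewrite mulr0.
by case: (eqVneq y 0) => // ny; case: none; exists y.
Qed.

Lemma PID_int : forall P : int -> Prop, P 0 ->
  (forall a b x y, P x -> P y -> P (a * x + b * y)) ->
  exists d, P d /\ forall x, P x -> exists q, x = q * d.
Proof.
move=> P P0 PC; case: (pselect (exists x, P x /\ x != 0)) => [[x0 [Px0 nx0]]|none]; last first.
  exists 0; split=> // y Py; exists 0; rewrite mulr0.
  by case: (eqVneq y 0) => // ny; case: none; exists y.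
have PN : forall x, P x -> P (- x).
  by move=> x Px; have := PC (-1) 0 x x Px Px; rewrite mul0r addr0 mulN1r.
pose Q := fun n : nat => (0 < n)%N && `[< P n%:Z >].
have exQ : exists n, Q n.
  exists `|x0|%N; rewrite /Q absz_gt0 nx0 /=; apply/asboolP.
  case: (ltrP x0 0) => s; first by rewrite ltz0_abs //; apply: PN.
  by rewrite gez0_abs.
case: (ex_minnP exQ) => N /andP[N0 /asboolP PN'] Nmin.
exists N%:Z; split=> // x Px; exists (x %/ N)%Z.
have dnz : (N%:Z != 0) by rewrite eqz_nat -lt0n.
have r0 := modz_ge0 x dnz.
have rlt : (x %% N < N)%Z by apply: ltz_pmod; lia.
have Pr : P (x %% N)%Z.
  have := PC 1 (- (x %/ N)%Z) x N%:Z Px PN'.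
  have E := divz_eq x N; move: E; set q := (x %/ N)%Z; set r := (x %% N)%Z => E.
  have -> : 1 * x + - q * N = r by rewrite [in LHS]E; ring.
  by [].
case: (eqVneq (x %% N)%Z 0) => [r00|rn0].
  by rewrite {1}(divz_eq x N) r00 addr0.
exfalso; move: r0 rlt rn0 Pr; case: (x %% N)%Z => [r|r] //= _ rlt rn0 Pr.
have Qr : Q r by rewrite /Q; apply/andP; split; [lia | apply/asboolP].
by have := Nmin r Qr; lia.
Qed.

Unset Implicit Arguments.

Theorem proposition8p12 (K : fieldType) (V : realType) (absK : K -> V)
  (G : groupType) (n : nat) :
  nonarch_abs absK ->
  [\/ exists2 p : nat, p \in [pchar K] & homology_fg 'F_p G n,
      [/\ [pchar K] =i pred0, residue_char_zero absK & homology_fg rat G n]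
    | [/\ [pchar K] =i pred0,
          (exists2 p : nat, (0 < p)%N & residue_char_eq absK p)
        & homology_fg int G n]] ->
  comparison_surjective absK G n.
Proof.
move=> na [[p pK fg]|[ch0 rc0 fg]|[ch0 _ fg]].
- apply: (@main_gen _ K V absK (fpK pK) (@fpK_inj p K pK) _ na (@PID_field _) G n fg).
  by move=> r; rewrite /fpK; apply: abs_nat.
- exact: (@main_gen _ K V absK (ratK ch0) (@ratK_inj K ch0) (abs_rat na ch0 rc0) na (@PID_field _) G n fg).
- exact: (@main_gen _ K V absK intr (@intK_inj K ch0) (abs_int na) na PID_int G n fg).
Qed.
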